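(* Assume $f$ is in Case 2. Let $l>0$ if $\delta\le d$, and $0<l<\alpha$ if $\delta>d$. Then there exist positive numbers $r_1,r_2$, which can be taken arbitrarily small, such that $f(U^l_{r_1,r_2})\subset U^l_{r_1,r_2}$, where $U^l_{r_1,r_2}=\{|z|<r_1,\ |w|<r_2|z|^l\}$.
   Context: Let $f(z,w)=(p(z),q(z,w))$ be a holomorphic skew product defined near the origin of $\mathbb{C}^2$ with $p(z)=az^{\delta}+O(z^{\delta+1})$, $a\neq0$, $\delta\ge2$, and $q(z,w)=\sum_{i,j\ge0}b_{ij}z^iw^j$ with $b_{00}=b_{01}=0$. The Newton polygon $N(q)$ is the convex hull of $\bigcup_{b_{ij}\ne0}\{(x,y):x\ge i,\ y\ge j\}$, with vertices $(n_1,m_1),\dots,(n_s,m_s)$, $n_1<\dots<n_s$, $m_1>\dots>m_s$, $s>1$. $T_{s-1}$ is the $y$-intercept of the line through $(n_{s-1},m_{s-1})$ and $(n_s,m_s)$. Case 2 means $\delta\le T_{s-1}$; then set $(\gamma,d)=(n_s,m_s)$ (so $\gamma>0$) and, when $\delta\neq d$, $\alpha=\gamma/(\delta-d)$. *)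

(* Defs.v *)
From HB Require Import structures.
From mathcomp Require Import all_boot all_order all_algebra.
From mathcomp Require Import all_classical all_reals all_analysis.
From mathcomp Require Import complex.
Set Implicit Arguments. Unset Strict Implicit. Unset Printing Implicit Defensive.
Import Order.TTheory GRing.Theory Num.Theory.
Import numFieldNormedType.Exports.
Local Open Scope classical_set_scope.
Local Open Scope ring_scope.

Definition cmod (R : realType) (z : R[i]) : R := Normc.normc z.

Definition psum1 (R : realType) (c : nat -> R[i]) (z : R[i]) (N : nat) : R[i] :=
  \sum_(k < N) c k * z ^+ k.

Definition psum2 (R : realType) (b : nat -> nat -> R[i]) (z w : R[i]) (N : nat)
  : R[i] := \sum_(i < N) \sum_(j < N) b i j * z ^+ i * w ^+ j.

Definition quadrants (R : realType) (b : nat -> nat -> R[i]) : set (R * R) :=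
  [set x | exists i j : nat, b i j != 0 /\ (i%:R <= x.1) /\ (j%:R <= x.2)].

Definition convex_hull2 (R : realType) (A : set (R * R)) : set (R * R) :=
  [set x | exists (n : nat) (t : 'I_n -> R) (P : 'I_n -> R * R),
     (forall k, 0 <= t k) /\ (\sum_(k < n) t k = 1) /\ (forall k, A (P k)) /\
     x = (\sum_(k < n) t k * (P k).1, \sum_(k < n) t k * (P k).2)].

Definition newton_polygon (R : realType) (b : nat -> nat -> R[i]) : set (R * R) :=
  convex_hull2 (quadrants b).

Definition np_vertex (R : realType) (b : nat -> nat -> R[i]) (v : R * R) : Prop :=
  newton_polygon b v /\
  forall x y t, newton_polygon b x -> newton_polygon b y -> 0 < t < 1 ->
    v = (t * x.1 + (1 - t) * y.1, t * x.2 + (1 - t) * y.2) -> x = v /\ y = v.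

Definition U_set (R : realType) (l r1 r2 : R) : set (R[i] * R[i]) :=
  [set zw | cmod zw.1 < r1 /\ cmod zw.2 < r2 * (cmod zw.1) `^ l].

Definition cconv (R : realType) (u : nat -> R[i]) (l : R[i]) : Prop :=
  (fun n => cmod (u n - l)) @ \oo --> (0 : R).

(* Main.v *)
Require Import Defs.
From HB Require Import structures.
From mathcomp Require Import all_boot all_order all_algebra.
From mathcomp Require Import all_classical all_reals all_analysis.
From mathcomp Require Import complex.
From mathcomp Require Import ring lra zify.
Import Order.TTheory GRing.Theory Num.Theory.
Import numFieldNormedType.Exports.
Local Open Scope classical_set_scope.
Local Open Scope ring_scope.
Set Implicit Arguments. Unset Strict Implicit.

Section Cmod.
Variable R : realType.
Implicit Types x y : R[i].

Lemma cmod_ge0 x : 0 <= cmod x.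
Proof. by case: x => a b; rewrite /cmod /= sqrtr_ge0. Qed.

Lemma cmodM x y : cmod (x * y) = cmod x * cmod y.
Proof. exact: Normc.normcM. Qed.

Lemma cmodD x y : cmod (x + y) <= cmod x + cmod y.
Proof. exact: le_normcD. Qed.

Lemma cmodN x : cmod (- x) = cmod x.
Proof. exact: normcN. Qed.

Lemma cmod0 : cmod (0 : R[i]) = 0.
Proof. exact: Normc.normc0. Qed.

Lemma cmodX x k : cmod (x ^+ k) = cmod x ^+ k.
Proof.
elim: k => [|k IH]; first by rewrite !expr0 /cmod Normc.normc1.
by rewrite !exprS cmodM IH.
Qed.

Lemma cmodB x y : cmod (x - y) <= cmod x + cmod y.
Proof. by rewrite -(cmodN y) cmodD. Qed.

Lemma cmod_sum n (F : 'I_n -> R[i]) :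
  cmod (\sum_(k < n) F k) <= \sum_(k < n) cmod (F k).
Proof.
elim/big_ind2: _ => //; first by rewrite cmod0.
move=> x1 x2 y1 y2 h1 h2; apply: le_trans (cmodD _ _) _; exact: lerD.
Qed.

Lemma cmod_eq0 x : cmod x = 0 -> x = 0.
Proof. exact: Normc.eq0_normc. Qed.

Lemma cmod_tri x y z : cmod (x - z) <= cmod (x - y) + cmod (y - z).
Proof. by have := cmodD (x - y) (y - z); rewrite addrA subrK. Qed.

Lemma cconv_eps (u : nat -> R[i]) l e : cconv u l -> 0 < e ->
  exists N, forall n, (N <= n)%N -> cmod (u n - l) < e.
Proof.
move=> /cvgrPdist_lt H he; have := H e he.
case=> N _ HN; exists N => n Hn; have := HN n Hn.
by rewrite /= sub0r normrN ger0_norm ?cmod_ge0.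
Qed.

Lemma cconv_le (u : nat -> R[i]) l X B N0 : cconv u l ->
  (forall n, (N0 <= n)%N -> cmod (u n - X) <= B) -> cmod (l - X) <= B.
Proof.
move=> Hc Hb; rewrite leNgt; apply/negP => Hlt.
have he : 0 < cmod (l - X) - B by rewrite subr_gt0.
have [N HN] := @cconv_eps u l _ Hc he.
have := HN (maxn N N0) (leq_maxl _ _).
have := Hb (maxn N N0) (leq_maxr _ _).
have := cmod_tri l (u (maxn N N0)) X.
rewrite -(cmodN (u _ - l)) opprB.
lra.
Qed.

End Cmod.
Section Geom.
Variable R : realType.
Variable b : nat -> nat -> R[i].

Lemma np_S i j : b i j != 0 -> newton_polygon b (i%:R, j%:R).
Proof.
move=> Hb; exists 1%N, (fun _ => 1), (fun _ => (i%:R, j%:R)).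
split; first by move=> _; exact: ler01.
split; first by rewrite big_ord1.
split; first by move=> _; exists i, j.
by rewrite !big_ord1 !mul1r.
Qed.

Lemma np_up x y : newton_polygon b x -> x.1 <= y.1 -> x.2 <= y.2 ->
  newton_polygon b y.
Proof.
case=> n [t [P [Ht [Ht1 [HP Ex]]]]] H1 H2.
pose d1 := y.1 - x.1; pose d2 := y.2 - x.2.
exists n, t, (fun k => ((P k).1 + d1, (P k).2 + d2)).
split=> //; split=> //; split.
  move=> k; case: (HP k) => i [j [Hb [Hi Hj]]]; exists i, j; split => //=.
  split; [apply: (le_trans Hi) | apply: (le_trans Hj)]; rewrite lerDl subr_ge0 //.
have E1 : \sum_(k < n) t k * ((P k).1 + d1) = y.1.
  rewrite (eq_bigr (fun k => t k * (P k).1 + t k * d1)) => [|k _]; last by rewrite mulrDr.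
  by rewrite big_split /= -mulr_suml Ht1 mul1r /d1 Ex /=; ring.
have E2 : \sum_(k < n) t k * ((P k).2 + d2) = y.2.
  rewrite (eq_bigr (fun k => t k * (P k).2 + t k * d2)) => [|k _]; last by rewrite mulrDr.
  by rewrite big_split /= -mulr_suml Ht1 mul1r /d2 Ex /=; ring.
by rewrite /= E1 E2; case: y {H1 H2 d1 d2 E1 E2}.
Qed.

Definition phi (al be : R) (x : R * R) := al * x.1 + be * x.2.

Section Min.
Variables (al be : R) (i0 j0 : nat).
Hypothesis (Hal : 0 < al) (Hbe : 0 < be) (Hb0 : b i0 j0 != 0).
Hypothesis Hmin : forall i j, b i j != 0 -> (i, j) <> (i0, j0) ->
  phi al be (i0%:R, j0%:R) < phi al be (i%:R, j%:R).

Let v : R * R := (i0%:R, j0%:R).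

Lemma quad_min y : quadrants b y -> phi al be v <= phi al be y /\
  (phi al be y = phi al be v -> y = v).
Proof.
case=> i [j [Hb [Hi Hj]]].
have Hle : phi al be (i%:R, j%:R) <= phi al be y.
  by rewrite /phi /= lerD // ler_pM2l.
have [Eij|Nij] := boolP ((i, j) == (i0, j0)).
  move/eqP: Eij => [Ei Ej]; rewrite Ei Ej in Hi Hj Hle.
  split => // Heq.
  case: y Hi Hj Hle Heq => y1 y2 /= Hi Hj _; rewrite /phi /v /= => Heq.
  have h1 : 0 <= al * (y1 - i0%:R) by rewrite mulr_ge0 ?subr_ge0 // ltW.
  have h2 : 0 <= be * (y2 - j0%:R) by rewrite mulr_ge0 ?subr_ge0 // ltW.
  have /eqP : al * (y1 - i0%:R) = 0 by lra.
  rewrite mulf_eq0 (gt_eqF Hal) subr_eq0 /= => /eqP E1.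
  have /eqP : be * (y2 - j0%:R) = 0 by lra.
  rewrite mulf_eq0 (gt_eqF Hbe) subr_eq0 /= => /eqP E2.
  by rewrite E1 E2.
have Hs := Hmin Hb (elimN eqP Nij).
split; first by apply/ltW/(lt_le_trans Hs).
move=> Heq; move: Hs; rewrite -Heq => Hs; have := lt_le_trans Hs Hle.
by rewrite ltxx.
Qed.

Lemma np_min x : newton_polygon b x -> phi al be v <= phi al be x /\
  (phi al be x = phi al be v -> x = v).
Proof.
case=> n [t [P [Ht [Ht1 [HP ->]]]]].
have Ephi : phi al be (\sum_(k < n) t k * (P k).1, \sum_(k < n) t k * (P k).2)
    = \sum_(k < n) t k * phi al be (P k).
  rewrite /phi /= !mulr_sumr -big_split /=; apply: eq_bigr => k _; ring.
have Ev : phi al be v = \sum_(k < n) t k * phi al be v by rewrite -mulr_suml Ht1 mul1r.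
have Hd : forall k, 0 <= t k * (phi al be (P k) - phi al be v).
  move=> k; apply: mulr_ge0 => //; rewrite subr_ge0; exact: (quad_min (HP k)).1.
have Esum : phi al be (\sum_(k < n) t k * (P k).1, \sum_(k < n) t k * (P k).2)
   - phi al be v = \sum_(k < n) t k * (phi al be (P k) - phi al be v).
  rewrite Ephi {1}Ev -sumrB; apply: eq_bigr => k _; ring.
split; first by rewrite -subr_ge0 Esum sumr_ge0.
move=> /eqP; rewrite -subr_eq0 Esum psumr_eq0; last by move=> k _; exact: Hd.
move=> /allP Hall.
have Hk : forall k, t k * (P k).1 = t k * v.1 /\ t k * (P k).2 = t k * v.2.
  move=> k; have := Hall k (mem_index_enum _); rewrite /= mulf_eq0 => /orP [/eqP ->|].
    by rewrite !mul0r.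
  by rewrite subr_eq0 => /eqP /(quad_min (HP k)).2 ->.
rewrite (eq_bigr (fun k => t k * v.1)); last by move=> k _; case: (Hk k).
rewrite [X in (_, X)](eq_bigr (fun k => t k * v.2)); last by move=> k _; case: (Hk k).
by rewrite -!mulr_suml Ht1 !mul1r.
Qed.

Lemma min_vertex : np_vertex b v.
Proof.
split; first exact: np_S.
move=> x y t Hx Hy /andP [Ht0 Ht1] Ev.
have [Hx1 Hx2] := np_min Hx; have [Hy1 Hy2] := np_min Hy.
have E : phi al be v = t * phi al be x + (1 - t) * phi al be y.
  by rewrite {1}Ev /phi /=; ring.
have Ex : phi al be x = phi al be v by nra.
have Ey : phi al be y = phi al be v by nra.
by split; [apply: Hx2|apply: Hy2].
Qed.

End Min.

Lemma vertex_le v x : np_vertex b v -> newton_polygon b x ->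
  x.1 <= v.1 -> x.2 <= v.2 -> x = v.
Proof.
case=> Hv Hext Hx H1 H2.
pose y := (2 * v.1 - x.1, 2 * v.2 - x.2).
have Hy : newton_polygon b y by apply: (np_up Hv) => /=; lra.
have H : (0 : R) < (2 : R)^-1 < 1 by rewrite invr_gt0 invf_lt1 //=; lra.
have := Hext x y (2 : R)^-1 Hx Hy H.
case; last by [].
rewrite /y; case: v {Hv Hext H1 H2 y Hy} => v1 v2 /=; congr (_, _); field; lra.
Qed.

End Geom.
Arguments phi {R}.

Lemma ex_min (P : nat -> Prop) : (exists n, P n) ->
  exists n, P n /\ forall m, P m -> (n <= m)%N.
Proof.
move=> H; have H' : exists n, `[< P n >] by case: H => n Hn; exists n; apply/asboolP.
case: (ex_minnP H') => n /asboolP Hn Hmin; exists n; split => // m Hm.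
by apply: Hmin; apply/asboolP.
Qed.

Section Below.
Variable R : realType.
Variable b : nat -> nat -> R[i].

Lemma no_below al be v' v w : 0 < al -> 0 < be -> np_vertex b v' ->
  newton_polygon b v -> newton_polygon b w -> w.1 < v'.1 -> v'.1 < v.1 ->
  phi al be v' = phi al be v -> phi al be w < phi al be v' -> False.
Proof.
case: v' => v1' v2'; case: v => v1 v2; case: w => w1 w2 /=.
move=> Hal Hbe Hv' Hv Hw H1 H2; rewrite /phi /= => Heq Hlt.
pose D1 := v1' - w1; pose E := v1 - v1'.
have HD1 : 0 < D1 by rewrite /D1 subr_gt0.
have HE : 0 < E by rewrite /E subr_gt0.
pose yy := w2 + (v2' - w2) * (D1 + E) / D1.
have Ev2 : v2 = (al * v1' + be * v2' - al * v1) / be.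
  by rewrite Heq; field; rewrite gt_eqF.
have Hyy : v2 <= yy.
  have -> : yy = v2 + E * ((al * v1' + be * v2') - (al * w1 + be * w2)) / (be * D1).
    rewrite /yy Ev2 /E /D1; field.
    by rewrite !gt_eqF // subr_gt0.
  rewrite lerDl; apply: divr_ge0; last by apply: mulr_ge0; apply: ltW.
  by apply: mulr_ge0; apply: ltW; rewrite // subr_gt0.
have Hy : newton_polygon b (v1, yy) by apply: (@np_up R b _ _ Hv) => /=.
pose tau := D1 / (D1 + E).
have Ht1 : 0 < tau by apply: divr_gt0 => //; apply: addr_gt0.
have Ht2 : tau < 1.
  rewrite /tau ltr_pdivrMr; last by apply: addr_gt0.
  by rewrite -subr_gt0; have -> : 1 * (D1 + E) - D1 = E by ring.
have Ht : 0 < tau < 1 by rewrite Ht1 Ht2.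
have Hx : (v1', v2') = (tau * (v1, yy).1 + (1 - tau) * (w1, w2).1,
                        tau * (v1, yy).2 + (1 - tau) * (w1, w2).2).
  rewrite /tau /yy /=; congr (_, _); rewrite /D1 /E; field;
    by rewrite ?gt_eqF //; lra.
have [_ Ew] := Hv'.2 _ _ _ Hy Hw Ht Hx.
by case: Ew => Ew _; move: H1; rewrite Ew ltxx.
Qed.

End Below.

Section Claims.
Variable R : realType.
Variable b : nat -> nat -> R[i].
Variables n_s m_s n_s1 m_s1 : nat.
Hypothesis Hvs : np_vertex b (n_s%:R, m_s%:R).
Hypothesis Hvs1 : np_vertex b (n_s1%:R, m_s1%:R).
Hypothesis Hlt : (n_s1 < n_s)%N.
Hypothesis Hlast : forall v, np_vertex b v -> v.1 <= n_s%:R.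
Hypothesis Hprev : forall v, np_vertex b v -> v.1 < n_s%:R -> v.1 <= n_s1%:R.

Lemma claim0 : (m_s < m_s1)%N.
Proof.
rewrite ltnNge; apply/negP => Hle.
have Hx : newton_polygon b (n_s1%:R, m_s%:R).
  by apply: (@np_up R b _ _ Hvs1.1) => /=; rewrite ?lexx ?ler_nat.
have := @vertex_le R b _ _ Hvs Hx.
rewrite /= ler_nat (ltnW Hlt) lexx => /(_ isT isT) [] /eqP.
by rewrite eqr_nat => /eqP E; move: Hlt; rewrite E ltnn.
Qed.

Lemma claim1 i j : b i j != 0 -> (m_s <= j)%N.
Proof.
move=> Hb; rewrite leqNgt; apply/negP => Hj.
have [j0 [[i' Hi'] Hj0]] := @ex_min (fun j => exists i, b i j != 0)
   (ex_intro _ j (ex_intro _ i Hb)).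
have [i0 [Hi0 Hi0m]] := @ex_min (fun i => b i j0 != 0) (ex_intro _ i' Hi').
have Hv0 : np_vertex b (i0%:R, j0%:R).
  have H01 : (0 : R) < 1 by [].
  have H0S : (0 : R) < (i0.+1)%:R by rewrite ltr0n.
  apply: (@min_vertex R b 1 (i0.+1)%:R i0 j0 H01 H0S Hi0).
  move=> i1 j1 Hb1 Hne; rewrite /phi /= !mul1r.
  have Hj1 := Hj0 j1 (ex_intro _ i1 Hb1).
  rewrite -!natrM -!natrD ltr_nat.
  case: (ltngtP j0 j1) => [lt|gt|eq]; first by nia.
    by move: Hj1; rewrite leqNgt gt.
  subst j1; have := Hi0m i1 Hb1; rewrite leq_eqVlt => /orP [/eqP E|lt].
    by subst i1.
  by rewrite ltn_add2r.
have Hi0n : (i0 <= n_s)%N by rewrite -(ler_nat R); exact: (Hlast Hv0).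
have Hx : newton_polygon b (n_s%:R, j0%:R).
  by apply: (@np_up R b _ _ (@np_S R b _ _ Hi0)) => /=; rewrite ?lexx ?ler_nat.
have := @vertex_le R b _ _ Hvs Hx.
rewrite /= lexx ler_nat => /(_ isT).
have -> : (j0 <= m_s)%N by have := Hj0 j (ex_intro _ i Hb); lia.
move=> /(_ isT) [] /eqP; rewrite eqr_nat => /eqP E.
by have := Hj0 j (ex_intro _ i Hb); lia.
Qed.


Lemma claim2 i j : b i j != 0 ->
  ((m_s1 - m_s) * n_s + (n_s - n_s1) * m_s <= (m_s1 - m_s) * i + (n_s - n_s1) * j)%N.
Proof.
have Hm := claim0.
set A := (m_s1 - m_s)%N; set B := (n_s - n_s1)%N.
have HA : (1 <= A)%N by rewrite /A; lia.
have HB : (1 <= B)%N by rewrite /B; lia.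
have Eid : (A * n_s + B * m_s = A * n_s1 + B * m_s1)%N.
  have -> : n_s = (n_s1 + B)%N by rewrite /B; lia.
  have -> : m_s1 = (m_s + A)%N by rewrite /A; lia.
  by rewrite !mulnDr mulnC [(B * A)%N]mulnC; lia.
move=> Hb; rewrite leqNgt; apply/negP => Hlt0.
have [c [[i1 [j1 [Hb1 E1]]] Hcmin]] := @ex_min
  (fun c => exists i j, b i j != 0 /\ (A * i + B * j)%N = c)
  (ex_intro _ _ (ex_intro _ i (ex_intro _ j (conj Hb erefl)))).
have [k [[iw [jw [Hbw [Ew Ek]]]] Hkmin]] := @ex_min
  (fun k => exists i j, b i j != 0 /\ (A * i + B * j)%N = c /\ k = (c - i)%N)
  (ex_intro _ _ (ex_intro _ i1 (ex_intro _ j1 (conj Hb1 (conj E1 erefl))))).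
have Hle_psi : forall i2 j2, (i2 <= A * i2 + B * j2)%N.
  move=> i2 j2; apply: leq_trans (leq_addr _ _); exact: leq_pmull.
have Hiwc : (iw <= c)%N by rewrite -Ew.
have Hmax : forall i2 j2, b i2 j2 != 0 -> (A * i2 + B * j2)%N = c -> (i2 <= iw)%N.
  move=> i2 j2 Hb2 E2.
  have := Hkmin _ (ex_intro _ i2 (ex_intro _ j2 (conj Hb2 (conj E2 erefl)))).
  have : (i2 <= c)%N by rewrite -E2.
  lia.
pose K := (c + 2)%N.
have HK : K = (c + 2)%N by [].
clearbody K.
have Hv : np_vertex b (iw%:R, jw%:R).
  have Hal : (0 : R) < K%:R * A%:R - 1.
    have HKA : (2 <= K * A)%N by rewrite HK; apply: leq_trans (leq_pmulr _ HA); lia.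
    rewrite -natrM -(@natrB _ _ 1); last by lia.
    by rewrite ltr0n subn_gt0.
  have Hbe : (0 : R) < K%:R * B%:R by rewrite -natrM ltr0n HK muln_gt0; lia.
  apply: (@min_vertex R b _ _ iw jw Hal Hbe Hbw).
  move=> i2 j2 Hb2 Hne.
  suff Hn : (K * (A * iw + B * jw) + i2 < K * (A * i2 + B * j2) + iw)%N.
    move: Hn; rewrite -(ltr_nat R) /phi /= !natrD !natrM => Hn; lra.
  have Hc2 := Hcmin _ (ex_intro _ i2 (ex_intro _ j2 (conj Hb2 erefl))).
  rewrite Ew.
  move: Hc2; rewrite leq_eqVlt => /orP [/eqP E2|Hc2].
    have Hle := Hmax _ _ Hb2 (esym E2).
    move: Hle; rewrite leq_eqVlt => /orP [/eqP Ei|Hlti].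
      exfalso; apply: Hne; subst i2; congr (_, _).
      have : (B * j2 = B * jw)%N by lia.
      by move/eqP; rewrite eqn_mul2l; case/orP => [/eqP|/eqP] //; lia.
    by rewrite -E2; lia.
  have Hi2 := Hle_psi i2 j2.
  move: (A * i2 + B * j2)%N Hc2 Hi2 => P Hc2 Hi2.
  have : ((c + 1) * (c + 1) <= (c + 1) * P)%N.
    by rewrite leq_mul2l; apply/orP; right; lia.
  rewrite HK !mulnDl !mulnDr; lia.
have Hlt' : (c < A * n_s + B * m_s)%N.
  have := Hcmin _ (ex_intro _ i (ex_intro _ j (conj Hb erefl))); lia.
have Hiw : (iw < n_s)%N.
  rewrite ltnNge; apply/negP => Hle.
  have Hj := claim1 Hbw.
  have : (A * n_s + B * m_s <= A * iw + B * jw)%N.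
    by apply: leq_add; rewrite leq_mul2l ?Hle ?Hj orbT.
  lia.
have Hiw1 : (iw <= n_s1)%N.
  rewrite -(ler_nat R); apply: (Hprev Hv) => /=; by rewrite ltr_nat.
move: Hiw1; rewrite leq_eqVlt => /orP [/eqP Ei|Hlti].
  have Hx := @np_S R b _ _ Hbw.
  have := @vertex_le R b _ _ Hvs1 Hx.
  rewrite /= Ei lexx ler_nat => /(_ isT).
  have -> : (jw <= m_s1)%N.
    have : (B * jw < B * m_s1)%N by subst iw; lia.
    by rewrite ltn_pmul2l //; apply: ltnW.
  move=> /(_ isT) [] /eqP; rewrite eqr_nat => /eqP Ej.
  by subst iw jw; lia.
apply: (@no_below R b A%:R B%:R (n_s1%:R, m_s1%:R) (n_s%:R, m_s%:R) (iw%:R, jw%:R)).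
- by rewrite ltr0n.
- by rewrite ltr0n.
- exact: Hvs1.
- exact: Hvs.1.
- exact: np_S.
- by rewrite /= ltr_nat.
- by rewrite /= ltr_nat.
- by rewrite /phi /= -!natrM -!natrD Eid.
- by rewrite /phi /= -!natrM -!natrD ltr_nat -Eid Ew.
Qed.
End Claims.

Lemma key_arith (R : realType) (b : nat -> nat -> R[i]) (n_s m_s n_s1 m_s1 delta : nat) (l : R) :
  (m_s < m_s1)%N -> (n_s1 < n_s)%N ->
  (forall i j, b i j != 0 -> (m_s <= j)%N /\
    ((m_s1 - m_s) * n_s + (n_s - n_s1) * m_s <= (m_s1 - m_s) * i + (n_s - n_s1) * j)%N) ->
  delta%:R <= m_s%:R + n_s%:R * (m_s1%:R - m_s%:R) / (n_s%:R - n_s1%:R) :> R ->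
  (if (delta <= m_s)%N then 0 < l
          else (0 < l) && (l < n_s%:R / (delta%:R - m_s%:R))) ->
  exists kappa : R, 0 < kappa /\ forall i j, b i j != 0 ->
     (i = 0%N -> (delta <= j)%N) /\
     ((1 <= i)%N -> l * delta%:R + kappa <= i%:R + l * j%:R).
Proof.
move=> Hm Hn HS Hc Hl.
have Hl0 : 0 < l by case: (delta <= m_s)%N Hl => // /andP [].
pose Ar : R := m_s1%:R - m_s%:R; pose Br : R := n_s%:R - n_s1%:R.
have HAr : 0 < Ar by rewrite /Ar subr_gt0 ltr_nat.
have HBr : 0 < Br by rewrite /Br subr_gt0 ltr_nat.
have HSr : forall i j, b i j != 0 -> m_s%:R <= j%:R :> R /\
    Ar * n_s%:R + Br * m_s%:R <= Ar * i%:R + Br * j%:R.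
  move=> i j Hb; have [H1 H2] := HS i j Hb; split; first by rewrite ler_nat.
  have EA : (m_s1 - m_s)%:R = Ar :> R by rewrite /Ar natrB // ltnW.
  have EB : (n_s - n_s1)%:R = Br :> R by rewrite /Br natrB // ltnW.
  move: (m_s1 - m_s)%N (n_s - n_s1)%N EA EB H2 => A B EA EB H2.
  by rewrite -EA -EB -!natrM -!natrD ler_nat.
have Hc' : Br * delta%:R <= Br * m_s%:R + n_s%:R * Ar.
  move: Hc; rewrite -/Ar -/Br => Hc.
  have := ler_wpM2l (ltW HBr) Hc.
  by rewrite mulrDr [Br * (_ / _)]mulrC divfK ?gt_eqF // mulrC.
have Hgam : 0 < n_s%:R :> R by rewrite ltr0n; apply: leq_ltn_trans Hn.
have Hzero : forall i j, b i j != 0 -> i = 0%N -> (delta <= j)%N.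
  move=> i j Hb Hi; have [_ H2] := HSr i j Hb; move: H2; rewrite Hi mulr0 add0r => H2.
  rewrite -(ler_nat R); have : Br * delta%:R <= Br * j%:R by lra.
  by rewrite ler_pM2l.
have [Hcase|Hcase] := lerP Br (l * Ar).
- exists (n_s%:R + l * m_s%:R - l * delta%:R); split.
    case: (leqP delta m_s) Hl => Hdm Hl.
      have : l * delta%:R <= l * m_s%:R by rewrite ler_pM2l // ler_nat.
      lra.
    move: Hl => /andP [_ Hl].
    have Hdm' : 0 < delta%:R - m_s%:R :> R by rewrite subr_gt0 ltr_nat.
    move: Hl; rewrite ltr_pdivlMr // => Hl; lra.
  move=> i j Hb; split; first exact: Hzero.
  move=> Hi; have [H1 H2] := HSr i j Hb.
  have H3 : 0 <= (l * Ar - Br) * (j%:R - m_s%:R) by apply: mulr_ge0; lra.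
  have H4 : Ar * (n_s%:R + l * m_s%:R) <= Ar * (i%:R + l * j%:R) by nra.
  move: H4; rewrite ler_pM2l // => H4; lra.
- exists ((Br - l * Ar) / Br); split; first by apply: divr_gt0 => //; lra.
  move=> i j Hb; split; first exact: Hzero.
  move=> Hi; have [H1 H2] := HSr i j Hb.
  have Hi' : 1 <= i%:R :> R by rewrite ler1n.
  have H3 : Br - l * Ar <= (Br - l * Ar) * i%:R by rewrite ler_peMr //; lra.
  have H4 : l * (Ar * n_s%:R + Br * m_s%:R) <= l * (Ar * i%:R + Br * j%:R).
    by rewrite ler_pM2l.
  have H5 : l * (Br * delta%:R) <= l * (Br * m_s%:R + n_s%:R * Ar).
    by rewrite ler_pM2l.
  have H6 : Br * (l * delta%:R + (Br - l * Ar) / Br) <= Br * (i%:R + l * j%:R).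
    rewrite mulrDr [Br * (_ / _)]mulrC divfK ?gt_eqF //; lra.
  by move: H6; rewrite ler_pM2l.
Qed.

Section Anal.
Variable R : realType.
Local Notation h := ((2 : R)^-1).

Lemma cmod_sumP (I : finType) (P : pred I) (F : I -> R[i]) :
  cmod (\sum_(k | P k) F k) <= \sum_(k | P k) cmod (F k).
Proof.
elim/big_ind2: _ => //; first by rewrite cmod0.
move=> x1 x2 y1 y2 h1 h2; apply: le_trans (cmodD _ _) _; exact: lerD.
Qed.

Lemma geom_eq n : \sum_(k < n) h ^+ k = 2 - 2 * h ^+ n.
Proof.
elim: n => [|n IH]; first by rewrite big_ord0 expr0 mulr1 subrr.
rewrite big_ord_recr /= IH exprS; field; done.
Qed.

Lemma geom_le n : \sum_(k < n) h ^+ k <= 2.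
Proof.
rewrite geom_eq lerBlDr lerDl; apply: mulr_ge0 => //; apply: exprn_ge0.
Qed.

Lemma h_ge0 : 0 <= h. Proof. by rewrite invr_ge0. Qed.

Lemma div_le_h (x rho : R) : 0 < rho -> 0 <= x -> 2 * x <= rho -> x / rho <= h.
Proof.
move=> Hr Hx H2; rewrite ler_pdivrMr //.
have -> : h * rho = rho / 2 by rewrite mulrC.
by rewrite ler_pdivlMr //; lra.
Qed.

Lemma coef_le (x : R[i]) (rho M : R) k : 0 < rho -> cmod x * rho ^+ k <= M ->
  cmod x <= M / rho ^+ k.
Proof. by move=> Hr H; rewrite ler_pdivlMr // exprn_gt0. Qed.

Lemma term1_le (x z : R[i]) (rho M : R) k m : 0 < rho ->
  cmod x * rho ^+ k <= M -> 2 * cmod z <= rho -> (m <= k)%N ->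
  cmod (x * z ^+ k) <= M * (2 * cmod z / rho) ^+ m * h ^+ k.
Proof.
move=> Hr Hx Hz Hmk.
have HM : 0 <= M by apply: le_trans Hx; apply: mulr_ge0; [exact: cmod_ge0|apply: exprn_ge0; apply: ltW].
rewrite cmodM cmodX.
apply: (@le_trans _ _ (M / rho ^+ k * cmod z ^+ k)).
  by apply: ler_wpM2r; [apply: exprn_ge0; exact: cmod_ge0|exact: coef_le].
have -> : M / rho ^+ k * cmod z ^+ k = M * ((2 * cmod z / rho) ^+ k * h ^+ k).
  have E : 2 * cmod z / rho * h = cmod z / rho by field; rewrite gt_eqF.
  rewrite -exprMn E expr_div_n mulrA mulrAC //.
rewrite mulrA; apply: ler_wpM2r; first by apply: exprn_ge0; exact: h_ge0.
apply: ler_wpM2l => //; apply: ler_wiXn2l => //.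
  by apply: divr_ge0; [apply: mulr_ge0 => //; exact: cmod_ge0|exact: ltW].
by rewrite ler_pdivrMr // mul1r.
Qed.

End Anal.

Section Anal2.
Variable R : realType.
Local Notation h := ((2 : R)^-1).

Lemma powR_natX (t x : R) n : 0 <= t -> (t `^ x) ^+ n = t `^ (x * n%:R).
Proof. by move=> Ht; rewrite -powR_mulrn ?powR_ge0 // -powRrM. Qed.

Lemma p_est (c : nat -> R[i]) (a z : R[i]) (delta : nat) (rho M : R) N :
  0 < rho -> (forall k, cmod (c k) * rho ^+ k <= M) ->
  (forall k, (k < delta)%N -> c k = 0) -> c delta = a -> 2 * cmod z <= rho ->
  (delta < N)%N ->
  cmod (psum1 c z N - a * z ^+ delta) <= 2 * (M * (2 * cmod z / rho) ^+ delta.+1).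
Proof.
move=> Hr Hc Hlow Hd Hz HN.
have HM : 0 <= M.
  by apply: le_trans (Hc 0%N); rewrite expr0 mulr1; exact: cmod_ge0.
have Hx0 : 0 <= 2 * cmod z / rho.
  by apply: divr_ge0; [apply: mulr_ge0 => //; exact: cmod_ge0|exact: ltW].
pose G := fun k : 'I_N => M * (2 * cmod z / rho) ^+ delta.+1 * h ^+ k.
have HG : forall k, 0 <= G k.
  move=> k; apply: mulr_ge0; first by apply: mulr_ge0 => //; apply: exprn_ge0.
  by apply: exprn_ge0; exact: h_ge0.
rewrite /psum1 (bigD1 (Ordinal HN)) //= Hd addrAC subrr add0r.
apply: le_trans (cmod_sumP _ _) _.
apply: (@le_trans _ _ (\sum_(k < N | k != Ordinal HN) G k)).
  apply: ler_sum => k Hk; case: (ltngtP k delta) => Hkd.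
  - by rewrite Hlow // mul0r cmod0.
  - exact: term1_le.
  - by move: Hk; rewrite -(inj_eq val_inj) /= Hkd eqxx.
apply: (@le_trans _ _ (\sum_(k < N) G k)).
  by rewrite [X in _ <= X](bigD1 (Ordinal HN)) //= lerDr.
rewrite /G -mulr_sumr mulrC; apply: ler_wpM2r; last exact: geom_le.
by apply: mulr_ge0 => //; apply: exprn_ge0.
Qed.

Lemma expo_ineq (l kappa dl E : R) : 0 < l -> 0 < kappa -> 0 <= dl ->
  dl + kappa <= E ->
  dl + kappa / 2 + kappa / (2 * (kappa + dl)) * E <= E.
Proof.
move=> Hl Hk Hd HE.
set eta := kappa / (2 * (kappa + dl)).
have HD : 0 < kappa + dl by lra.
have Heta : eta * (kappa + dl) = kappa / 2 by rewrite /eta; field; rewrite gt_eqF.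
have Heta1 : eta <= 2^-1.
  rewrite /eta ler_pdivrMr; last by lra.
  have -> : 2^-1 * (2 * (kappa + dl)) = kappa + dl :> R by field.
  lra.
have H : 0 <= (1 - eta) * (E - (kappa + dl)) by apply: mulr_ge0; lra.
lra.
Qed.

Lemma term2_le (x z w : R[i]) (rho M l kappa : R) (delta i j : nat) :
  0 < rho -> cmod x * rho ^+ (i + j) <= M -> 0 < l -> 0 < kappa ->
  0 < cmod z <= 1 -> cmod w <= cmod z `^ l ->
  l * delta%:R + kappa <= i%:R + l * j%:R ->
  2 * cmod z `^ (kappa / (2 * (kappa + l * delta%:R))) <= rho ->
  2 * cmod z `^ (kappa / (2 * (kappa + l * delta%:R)) * l) <= rho ->
  cmod (x * z ^+ i * w ^+ j) <= M * cmod z `^ (l * delta%:R + kappa / 2) * h ^+ i * h ^+ j.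
Proof.
move=> Hr Hx Hl Hk /andP [Ht0 Ht1] Hw HE Hu Hv.
set t := cmod z in Ht0 Ht1 Hw Hu Hv *.
set eta := kappa / (2 * (kappa + l * delta%:R)) in Hu Hv *.
have HM : 0 <= M.
  by apply: le_trans Hx; apply: mulr_ge0; [exact: cmod_ge0|apply: exprn_ge0; apply: ltW].
have Hdl : 0 <= l * delta%:R by apply: mulr_ge0; [apply: ltW|].
rewrite !cmodM !cmodX.
have Hb := coef_le Hr Hx.
have Hwj : cmod w ^+ j <= (t `^ l) ^+ j by apply: lerXn2r; rewrite ?nnegrE ?cmod_ge0 ?powR_ge0.
have Hkey : t ^+ i * (t `^ l) ^+ j <=
    t `^ (l * delta%:R + kappa / 2) * (t `^ eta) ^+ i * (t `^ (eta * l)) ^+ j.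
  rewrite -(powR_mulrn _ (ltW Ht0)) !powR_natX ?(ltW Ht0) //.
  rewrite -!powRD; [|by apply/implyP => _; rewrite gt_eqF..].
  have Ht01 : 0 < t <= 1 by apply/andP; split.
  apply: (ger_powR Ht01).
  have := expo_ineq Hl Hk Hdl HE; rewrite -/eta => H.
  have -> : l * delta%:R + kappa / 2 + eta * i%:R + eta * l * j%:R =
            l * delta%:R + kappa / 2 + eta * (i%:R + l * j%:R) by ring.
  exact: H.
apply: (@le_trans _ _ (M / rho ^+ (i + j) * (t ^+ i * (t `^ l) ^+ j))).
  rewrite mulrA; apply: ler_pM; last exact: Hwj.
  - by apply: mulr_ge0; [exact: cmod_ge0|apply: exprn_ge0; exact: cmod_ge0].
  - by apply: exprn_ge0; exact: cmod_ge0.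
  - by apply: ler_wpM2r => //; apply: exprn_ge0; exact: cmod_ge0.
apply: (@le_trans _ _ (M / rho ^+ (i + j) *
    (t `^ (l * delta%:R + kappa / 2) * (t `^ eta) ^+ i * (t `^ (eta * l)) ^+ j))).
  apply: ler_wpM2l => //; apply: divr_ge0 => //; apply: exprn_ge0; exact: ltW.
have -> : M / rho ^+ (i + j) *
    (t `^ (l * delta%:R + kappa / 2) * (t `^ eta) ^+ i * (t `^ (eta * l)) ^+ j) =
    M * t `^ (l * delta%:R + kappa / 2) * (t `^ eta / rho) ^+ i * (t `^ (eta * l) / rho) ^+ j.
  rewrite !expr_div_n exprD; field; rewrite !expf_neq0 // gt_eqF //.
apply: ler_pM.
- apply: mulr_ge0; first by apply: mulr_ge0 => //; exact: powR_ge0.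
  by apply: exprn_ge0; apply: divr_ge0; [exact: powR_ge0|exact: ltW].
- by apply: exprn_ge0; apply: divr_ge0; [exact: powR_ge0|exact: ltW].
- apply: ler_wpM2l; first by apply: mulr_ge0 => //; exact: powR_ge0.
  apply: lerXn2r; rewrite ?nnegrE ?h_ge0 //; first by apply: divr_ge0; [exact: powR_ge0|exact: ltW].
  by apply: div_le_h => //; exact: powR_ge0.
- apply: lerXn2r; rewrite ?nnegrE ?h_ge0 //; first by apply: divr_ge0; [exact: powR_ge0|exact: ltW].
  by apply: div_le_h => //; exact: powR_ge0.
Qed.

End Anal2.

Section Anal3.
Variable R : realType.
Local Notation h := ((2 : R)^-1).

Lemma q_est (b : nat -> nat -> R[i]) (z w : R[i]) (delta : nat) (rho M l kappa : R) N :
  0 < rho -> (forall i j, cmod (b i j) * rho ^+ (i + j) <= M) -> 0 < l -> 0 < kappa ->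
  (forall i j, b i j != 0 -> (i = 0%N -> (delta <= j)%N) /\
     ((1 <= i)%N -> l * delta%:R + kappa <= i%:R + l * j%:R)) ->
  0 < cmod z <= 1 -> cmod w <= cmod z `^ l -> 2 * cmod w <= rho ->
  2 * cmod z `^ (kappa / (2 * (kappa + l * delta%:R))) <= rho ->
  2 * cmod z `^ (kappa / (2 * (kappa + l * delta%:R)) * l) <= rho ->
  cmod (psum2 b z w N) <= 2 * (M * (2 * cmod w / rho) ^+ delta) +
                          4 * (M * cmod z `^ (l * delta%:R + kappa / 2)).
Proof.
move=> Hr Hb Hl Hk Hkey Ht Hw Hw2 Hu Hv.
have HM : 0 <= M.
  by apply: le_trans (Hb 0%N 0%N); rewrite expr0 mulr1; exact: cmod_ge0.
have Hx0 : 0 <= 2 * cmod w / rho.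
  by apply: divr_ge0; [apply: mulr_ge0 => //; exact: cmod_ge0|exact: ltW].
have HC0 : 0 <= M * (2 * cmod w / rho) ^+ delta by apply: mulr_ge0 => //; apply: exprn_ge0.
have HC1 : 0 <= M * cmod z `^ (l * delta%:R + kappa / 2) by apply: mulr_ge0 => //; exact: powR_ge0.
case: N => [|N].
  rewrite /psum2 big_ord0 cmod0; apply: addr_ge0; apply: mulr_ge0 => //.
rewrite /psum2 big_ord_recl.
apply: le_trans (cmodD _ _) _; apply: lerD.
  apply: le_trans (cmod_sumP _ _) _.
  apply: (@le_trans _ _ (\sum_(j < N.+1) M * (2 * cmod w / rho) ^+ delta * h ^+ j)).
    apply: ler_sum => j _; rewrite /= expr0 mulr1.
    have [E0|N0] := eqVneq (b 0%N j) 0.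
      rewrite E0 mul0r cmod0; apply: mulr_ge0 => //; apply: exprn_ge0; exact: h_ge0.
    by apply: term1_le => //; apply: (Hkey _ _ N0).1.
  rewrite -mulr_sumr mulrC; apply: ler_wpM2r => //; exact: geom_le.
apply: le_trans (cmod_sumP _ _) _.
apply: (@le_trans _ _ (\sum_(i < N) \sum_(j < N.+1)
   (M * cmod z `^ (l * delta%:R + kappa / 2)) * h ^+ i * h ^+ j)).
  apply: ler_sum => i _; apply: le_trans (cmod_sumP _ _) _; apply: ler_sum => j _.
  rewrite lift0.
  have [E0|N0] := eqVneq (b i.+1 j) 0.
    rewrite E0 !mul0r cmod0; apply: mulr_ge0; last by apply: exprn_ge0; exact: h_ge0.
    by apply: mulr_ge0 => //; apply: exprn_ge0; exact: h_ge0.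
  apply: le_trans (@term2_le R (b i.+1 j) z w rho M l kappa delta i.+1 j Hr (Hb _ _) Hl Hk
     Ht Hw ((Hkey _ _ N0).2 isT) Hu Hv) _.
  apply: ler_wpM2r; first by apply: exprn_ge0; exact: h_ge0.
  apply: ler_wpM2l => //; rewrite exprS; rewrite ler_piMl //.
  by rewrite invf_le1 //; lra.
have E : forall i : 'I_N, \sum_(j < N.+1) M * cmod z `^ (l * delta%:R + kappa / 2) * h ^+ i * h ^+ j
   = M * cmod z `^ (l * delta%:R + kappa / 2) * h ^+ i * \sum_(j < N.+1) h ^+ j.
  by move=> i; rewrite mulr_sumr.
rewrite (eq_bigr _ (fun i _ => E i)).
apply: (@le_trans _ _ (\sum_(i < N) M * cmod z `^ (l * delta%:R + kappa / 2) * h ^+ i * 2)).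
  apply: ler_sum => i _; apply: ler_wpM2l; last exact: geom_le.
  by apply: mulr_ge0 => //; apply: exprn_ge0; exact: h_ge0.
rewrite -mulr_suml -mulr_sumr.
have HG := @geom_le R N.
have : M * cmod z `^ (l * delta%:R + kappa / 2) * (\sum_(i < N) h ^+ i) <=
       M * cmod z `^ (l * delta%:R + kappa / 2) * 2 by apply: ler_wpM2l.
lra.
Qed.

End Anal3.

Lemma final_est (R : realType) (p : R[i] -> R[i]) (q : R[i] -> R[i] -> R[i])
  (c : nat -> R[i]) (b : nat -> nat -> R[i]) (a : R[i]) (delta : nat)
  (rho M1 l kappa r1 r2 : R) (z w : R[i]) :
  0 < rho -> 0 < M1 ->
  (forall k, cmod (c k) * rho ^+ k <= M1) ->
  (forall i j, cmod (b i j) * rho ^+ (i + j) <= M1) ->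
  (forall k, (k < delta)%N -> c k = 0) -> c delta = a -> (2 <= delta)%N ->
  (forall i j, b i j != 0 -> (i = 0%N -> (delta <= j)%N) /\
     ((0 < i)%N -> l * delta%:R + kappa <= i%:R + l * j%:R)) ->
  0 < l -> 0 < kappa ->
  cconv (psum1 c z) (p z) -> cconv (psum2 b z w) (q z w) ->
  0 < cmod a -> 0 < cmod z -> cmod z < r1 -> cmod w < r2 * cmod z `^ l ->
  cmod w <= cmod z `^ l -> 2 * cmod w <= rho -> 2 * cmod z <= rho ->
  2 * cmod z `^ (kappa / (2 * (kappa + l * delta%:R))) <= rho ->
  2 * cmod z `^ (kappa / (2 * (kappa + l * delta%:R)) * l) <= rho ->
  0 < r2 -> 2 * r2 <= rho -> r2 <= rho ^+ 2 * (cmod a / 2) `^ l / (16 * M1) ->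
  r1 <= cmod a / (4 * M1 * (2 / rho) ^+ delta.+1) -> r1 <= (2 * cmod a)^-1 -> r1 <= 2^-1 ->
  cmod z `^ (kappa / 2) <= r2 * (cmod a / 2) `^ l / (16 * M1) ->
  cmod (p z) < r1 /\ cmod (q z w) < r2 * cmod (p z) `^ l.
Proof.
move=> Hrho HM1 Hc1 Hb1 Hc_low Hc_delta Hdelta Hkey Hl0 Hk Hp Hq HA Ht0 Hz Hw Hw1 Hw2 H2t
  Hu Hv Hr2p Hr2r Hr2K Hr1c Hr1A Hr1h Hkap.
set t := cmod z in Ht0 Hz Hw Hw1 H2t Hu Hv Hkap *.
set A := cmod a in HA Hr2K Hr1c Hr1A Hkap *.
set K := (A / 2) `^ l in Hr2K Hkap *.
have HK : 0 < K by apply: powR_gt0; lra.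
have Ht1 : t <= 1 by lra.
pose Ep := 2 * (M1 * (2 * t / rho) ^+ delta.+1).
have Hpd : cmod (p z - a * z ^+ delta) <= Ep.
  apply: (cconv_le (N0 := delta.+1) Hp) => n Hn.
  exact: p_est Hrho Hc1 Hc_low Hc_delta H2t Hn.
have Htd0 : 0 < t ^+ delta by apply: exprn_gt0.
have HEp : Ep <= A * t ^+ delta / 2.
  have E : Ep = (2 * M1 * (2 / rho) ^+ delta.+1 * t) * t ^+ delta.
    rewrite /Ep; have -> : 2 * t / rho = (2 / rho) * t by rewrite mulrAC.
    by rewrite exprMn [t ^+ delta.+1]exprSr; ring.
  rewrite E.
  have Hc : 0 < (2 / rho) ^+ delta.+1 by apply: exprn_gt0; apply: divr_gt0.
  have H1 : 2 * M1 * (2 / rho) ^+ delta.+1 * t <= A / 2.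
    have := Hr1c; rewrite ler_pdivlMr; last by apply: mulr_gt0 => //; lra.
    move=> H; have : t * (4 * M1 * (2 / rho) ^+ delta.+1) <= A by apply: le_trans H; apply: ler_wpM2r; [apply: ltW; apply: mulr_gt0 => //; lra|lra].
    lra.
  have := ler_wpM2r (ltW Htd0) H1; lra.
have Haz : cmod (a * z ^+ delta) = A * t ^+ delta by rewrite cmodM cmodX.
have Hp_lo : A * t ^+ delta / 2 <= cmod (p z).
  have := cmod_tri (a * z ^+ delta) (p z) 0; rewrite !subr0 Haz.
  rewrite -(cmodN (a * z ^+ delta - p z)) opprB; lra.
have Hp_hi : cmod (p z) <= 3 / 2 * (A * t ^+ delta).
  have := cmod_tri (p z) (a * z ^+ delta) 0; rewrite !subr0 Haz; lra.
have Htd : t ^+ delta <= t * t.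
  rewrite -expr2; apply: ler_wiXn2l => //; lra.
have HAt : A * t <= 2^-1.
  have := ler_wpM2l (ltW HA) (ltW (lt_le_trans Hz Hr1A)).
  have -> : A * (2 * A)^-1 = 2^-1 by field; rewrite gt_eqF.
  done.
split.
  have : A * t ^+ delta <= 2^-1 * t.
    apply: le_trans (ler_wpM2l (ltW HA) Htd) _; rewrite mulrA; apply: ler_wpM2r; lra.
  lra.
pose P := t `^ (l * delta%:R).
have HP : 0 < P by apply: powR_gt0.
have Hpl : K * P <= cmod (p z) `^ l.
  have E : K * P = (A / 2 * t ^+ delta) `^ l.
    rewrite powRM; last 2 first.
    - by apply: divr_ge0; [exact: ltW|].
    - by apply: exprn_ge0; exact: ltW.
    by rewrite -(powR_mulrn delta (ltW Ht0)) -powRrM [delta%:R * l]mulrC.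
  rewrite E; apply: ge0_ler_powR; rewrite ?nnegrE.
  - exact: (ltW Hl0).
  - by apply/ltW; rewrite -mulrAC; apply: divr_gt0 => //; apply: mulr_gt0.
  - exact: cmod_ge0.
  - by rewrite mulrAC.
have Ht01 : 0 < t <= 1 by apply/andP; split.
have Hqb : cmod (q z w) <= 2 * (M1 * (2 * cmod w / rho) ^+ delta) +
                          4 * (M1 * t `^ (l * delta%:R + kappa / 2)).
  rewrite -[q z w]subr0; apply: (cconv_le (N0 := 0%N) Hq) => n _; rewrite subr0.
  exact: q_est n Hrho Hb1 Hl0 Hk Hkey Ht01 Hw1 Hw2 Hu Hv.
have Hx : 2 * cmod w / rho <= (2 * r2 / rho) * t `^ l.
  have -> : 2 * r2 / rho * t `^ l = 2 * (r2 * t `^ l) / rho by ring.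
  by apply: ler_wpM2r; [rewrite invr_ge0; exact: ltW|lra].
have Hy0 : 0 <= 2 * r2 / rho by apply: divr_ge0; lra.
have Hy1 : 2 * r2 / rho <= 1 by rewrite ler_pdivrMr // mul1r.
have Hxd : (2 * cmod w / rho) ^+ delta <= (2 * r2 / rho) ^+ 2 * P.
  apply: le_trans (lerXn2r delta _ _ Hx) _.
  - by rewrite nnegrE; apply: divr_ge0; [apply: mulr_ge0 => //; exact: cmod_ge0|exact: ltW].
  - by rewrite nnegrE; apply: mulr_ge0 => //; exact: powR_ge0.
  rewrite exprMn powR_natX; last exact: ltW.
  apply: ler_wpM2r; first exact: ltW.
  exact: ler_wiXn2l.
have H1 : 2 * (M1 * (2 * cmod w / rho) ^+ delta) <= r2 * K * P / 2.
  have Hq1 : 2 * M1 * (2 * r2 / rho) ^+ 2 <= r2 * K / 2.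
    have : 16 * M1 * r2 <= rho ^+ 2 * K.
      by move: Hr2K; rewrite ler_pdivlMr; [lra|lra].
    move=> H16.
    have -> : 2 * M1 * (2 * r2 / rho) ^+ 2 = (16 * M1 * r2) * r2 / (2 * rho ^+ 2).
      by field; rewrite gt_eqF.
    rewrite ler_pdivrMr; last by apply: mulr_gt0; [lra|apply: exprn_gt0].
    have := ler_wpM2r (ltW Hr2p) H16.
    have -> : r2 * K / 2 * (2 * rho ^+ 2) = rho ^+ 2 * K * r2 by field.
    done.
  have := ler_wpM2r (ltW HP) Hq1.
  have := ler_wpM2l (ltW (mulr_gt0 (ltac:(lra) : (0:R) < 2) HM1)) Hxd.
  lra.
have H2 : 4 * (M1 * t `^ (l * delta%:R + kappa / 2)) <= r2 * K * P / 4.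
  rewrite powRD; last by apply/implyP => _; rewrite gt_eqF.
  rewrite -/P.
  have := ler_wpM2l (ltW (mulr_gt0 (ltac:(lra) : (0:R) < 4 * M1) HP)) Hkap.
  have -> : 4 * M1 * P * (r2 * K / (16 * M1)) = r2 * K * P / 4 by field; rewrite gt_eqF.
  lra.
have H3 : 0 < r2 * K * P by apply: mulr_gt0 => //; apply: mulr_gt0.
have := ler_wpM2l (ltW Hr2p) Hpl.
lra.
Qed.

Unset Implicit Arguments.

Theorem theorem2p2 (R : realType)
    (p : R[i] -> R[i]) (q : R[i] -> R[i] -> R[i])
    (c : nat -> R[i]) (b : nat -> nat -> R[i])
    (a : R[i]) (delta : nat) (rho M : R)
    (* holomorphic germs near 0: convergent power series on a polydisk *)
    (Hrho : 0 < rho)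
    (Hc_bound : forall k, cmod (c k) * rho ^+ k <= M)
    (Hb_bound : forall i j, cmod (b i j) * rho ^+ (i + j) <= M)
    (Hp : forall z, cmod z < rho -> cconv (psum1 c z) (p z))
    (Hq : forall z w, cmod z < rho -> cmod w < rho -> cconv (psum2 b z w) (q z w))
    (* p(z) = a z^delta + O(z^(delta+1)), a <> 0, delta >= 2 *)
    (Hdelta : (2 <= delta)%N) (Ha : a != 0)
    (Hc_low : forall k, (k < delta)%N -> c k = 0) (Hc_delta : c delta = a)
    (* b_00 = b_01 = 0 *)
    (Hb00 : b 0%N 0%N = 0) (Hb01 : b 0%N 1%N = 0)
    (* the last two vertices (n_{s-1},m_{s-1}), (n_s,m_s) of N(q), s > 1 *)
    (n_s m_s n_s1 m_s1 : nat)
    (Hvs : np_vertex b (n_s%:R, m_s%:R))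
    (Hvs1 : np_vertex b (n_s1%:R, m_s1%:R))
    (Hlt : (n_s1 < n_s)%N)
    (Hlast : forall v, np_vertex b v -> v.1 <= n_s%:R)
    (Hprev : forall v, np_vertex b v -> v.1 < n_s%:R -> v.1 <= n_s1%:R)
    (* Case 2: delta <= T_{s-1}, the y-intercept of the last edge *)
    (Hcase2 : delta%:R <= m_s%:R + n_s%:R * (m_s1%:R - m_s%:R) / (n_s%:R - n_s1%:R) :> R)
    (* (gamma, d) = (n_s, m_s); alpha = gamma / (delta - d) *)
    (l : R)
    (Hl : if (delta <= m_s)%N then 0 < l
          else (0 < l) && (l < n_s%:R / (delta%:R - m_s%:R))) :
  forall eps : R, 0 < eps ->
    exists r1 r2 : R, 0 < r1 /\ r1 < eps /\ 0 < r2 /\ r2 < eps /\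
      forall z w, U_set l r1 r2 (z, w) -> U_set l r1 r2 (p z, q z w).
Proof.
move=> eps Heps.
have Hm := claim0 Hvs Hvs1 Hlt.
have HS : forall i j, b i j != 0 -> (m_s <= j)%N /\
    ((m_s1 - m_s) * n_s + (n_s - n_s1) * m_s <= (m_s1 - m_s) * i + (n_s - n_s1) * j)%N.
  by move=> i j Hb; split; [exact: (claim1 Hvs Hlt Hlast Hb)|exact: (claim2 Hvs Hvs1 Hlt Hlast Hprev Hb)].
have [kappa [Hk Hkey]] := key_arith Hm Hlt HS Hcase2 Hl.
have Hl0 : 0 < l by case: (delta <= m_s)%N Hl => // /andP [].
have HM : 0 <= M.
  by apply: le_trans (Hc_bound 0%N); rewrite expr0 mulr1; exact: cmod_ge0.
pose M1 := M + 1.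
have HM1 : 0 < M1 by rewrite /M1; lra.
have Hc1 : forall k, cmod (c k) * rho ^+ k <= M1.
  by move=> k; apply: le_trans (Hc_bound k) _; rewrite /M1; lra.
have Hb1 : forall i j, cmod (b i j) * rho ^+ (i + j) <= M1.
  by move=> i j; apply: le_trans (Hb_bound i j) _; rewrite /M1; lra.
pose A := cmod a.
have HA : 0 < A.
  rewrite lt_neqAle cmod_ge0 andbT; apply/eqP => /esym /cmod_eq0 Ea.
  by move: Ha; rewrite Ea eqxx.
pose K := (A / 2) `^ l.
have HK : 0 < K by apply: powR_gt0; lra.
pose dr : R := delta%:R.
have Hd2 : 2 <= dr by rewrite /dr (ler_nat R 2).
pose eta := kappa / (2 * (kappa + l * dr)).
have Heta : 0 < eta.
  apply: divr_gt0 => //; apply: mulr_gt0 => //; apply: addr_gt0 => //.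
  by apply: mulr_gt0 => //; lra.
pose r2 := Num.min (eps / 2) (Num.min (2^-1) (Num.min (rho / 2) (rho ^+ 2 * K / (16 * M1)))).
have Hr2 : 0 < r2 /\ r2 <= eps / 2 /\ r2 <= 2^-1 /\ r2 <= rho / 2 /\ r2 <= rho ^+ 2 * K / (16 * M1).
  rewrite /r2 !lt_min !ge_min !lexx !orbT /=; split => //.
  apply/and4P; split; try lra.
  by apply: divr_gt0; [apply: mulr_gt0 => //; apply: exprn_gt0|lra].
pose g := r2 * K / (16 * M1).
pose c1 := A / (4 * M1 * (2 / rho) ^+ delta.+1).
pose r1 := Num.min (eps / 2) (Num.min (2^-1) (Num.min (rho / 2) (Num.min c1
   (Num.min (2 * A)^-1 (Num.min ((rho / 2) `^ (eta^-1)) (Num.min ((rho / 2) `^ ((eta * l)^-1))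
    (g `^ ((kappa / 2)^-1)))))))).
have [Hr2p [Hr2e [Hr2h [Hr2r Hr2K]]]] := Hr2.
have Hg : 0 < g by apply: divr_gt0; [apply: mulr_gt0|lra].
have Hc1p : 0 < c1.
  apply: divr_gt0 => //; apply: mulr_gt0; first lra.
  by apply: exprn_gt0; apply: divr_gt0.
have Hr1p : 0 < r1.
  rewrite /r1 !lt_min; repeat (apply/andP; split); try lra.
  - by rewrite invr_gt0; lra.
  - by apply: powR_gt0; lra.
  - by apply: powR_gt0; lra.
  - exact: powR_gt0.
have mle1 : forall x y : R, Num.min x y <= x by move=> x y; rewrite ge_min lexx.
have mle2 : forall x y : R, Num.min x y <= y by move=> x y; rewrite ge_min lexx orbT.
have Hr1e : r1 <= eps / 2 by exact: mle1.
have Hr1h : r1 <= 2^-1 by apply: le_trans (mle2 _ _) _; exact: mle1.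
have Hr1r : r1 <= rho / 2 by do 2 apply: le_trans (mle2 _ _) _; exact: mle1.
have Hr1c : r1 <= c1 by do 3 apply: le_trans (mle2 _ _) _; exact: mle1.
have Hr1A : r1 <= (2 * A)^-1 by do 4 apply: le_trans (mle2 _ _) _; exact: mle1.
have Hr1u : r1 <= (rho / 2) `^ (eta^-1) by do 5 apply: le_trans (mle2 _ _) _; exact: mle1.
have Hr1v : r1 <= (rho / 2) `^ ((eta * l)^-1) by do 6 apply: le_trans (mle2 _ _) _; exact: mle1.
have Hr1g : r1 <= g `^ ((kappa / 2)^-1) by do 6 apply: le_trans (mle2 _ _) _; exact: mle2.
exists r1, r2; split => //; split; first lra.
split => //; split; first lra.
move=> z w; rewrite /U_set /= => -[Hz Hw].
set t := cmod z in Hz Hw *.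
have Ht0 : 0 < t.
  have : 0 < r2 * t `^ l by apply: le_lt_trans (cmod_ge0 w) Hw.
  rewrite pmulr_rgt0 // => Htl.
  exact: gt0_powR Hl0 (cmod_ge0 z) Htl.
have Ht1 : t <= 1 by lra.
have Hzr : cmod z < rho by rewrite -/t; lra.
have Htl1 : t `^ l <= 1.
  apply: (@le_trans _ _ (1 `^ l)); last by rewrite powR1.
  apply: ge0_ler_powR; rewrite ?nnegrE; try lra.
have Htl0 : 0 <= t `^ l by exact: powR_ge0.
have Hwr2 : cmod w <= r2 by apply: ltW; apply: lt_le_trans Hw _; rewrite ler_piMr //; lra.
have Hw1 : cmod w <= t `^ l by apply: ltW; apply: lt_le_trans Hw _; rewrite ler_piMl //; lra.
have Hw2 : 2 * cmod w <= rho by lra.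
have Hwrho : cmod w < rho by have := cmod_ge0 w; lra.
have Hpow : forall (x e : R), 0 < e -> 0 <= x -> x <= r1 -> x `^ e <= r1 `^ e.
  move=> x e He Hx Hxr; apply: ge0_ler_powR; rewrite ?nnegrE; try lra.
have Hpow2 : forall (y e : R), 0 < e -> 0 < y -> r1 <= y `^ (e^-1) -> r1 `^ e <= y.
  move=> y e He Hy Hr.
  have := @ge0_ler_powR R e (ltW He) r1 (y `^ (e^-1)).
  rewrite !nnegrE -powRrM mulVf ?gt_eqF // powRr1; last by lra.
  by move=> H; apply: H => //; [lra|exact: powR_ge0].
have Hu : 2 * t `^ eta <= rho.
  have := Hpow t eta Heta (ltW Ht0) (ltW Hz).
  have := Hpow2 (rho / 2) eta Heta (ltac:(lra)) Hr1u.
  lra.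
have Hv : 2 * t `^ (eta * l) <= rho.
  have Hel : 0 < eta * l by apply: mulr_gt0.
  have := Hpow t (eta * l) Hel (ltW Ht0) (ltW Hz).
  have := Hpow2 (rho / 2) (eta * l) Hel (ltac:(lra)) Hr1v.
  lra.
have H2t : 2 * cmod z <= rho by rewrite -/t; lra.
have Hr2r' : 2 * r2 <= rho by lra.
have Hkap : t `^ (kappa / 2) <= g.
  have Hk2 : 0 < kappa / 2 by lra.
  have := Hpow t (kappa / 2) Hk2 (ltW Ht0) (ltW Hz).
  have := Hpow2 g (kappa / 2) Hk2 Hg Hr1g.
  lra.
exact: (final_est Hrho HM1 Hc1 Hb1 Hc_low Hc_delta Hdelta Hkey Hl0 Hk (Hp z Hzr) (Hq z w Hzr Hwrho)
  HA Ht0 Hz Hw Hw1 Hw2 H2t Hu Hv Hr2p Hr2r' Hr2K Hr1c Hr1A Hr1h Hkap).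
Qed.
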